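(* Let $A$ be a sequence algebra and $X$ an essential homogeneous normed $A$-module. Then for every $x\in X$, $x=\lim_{N\to\infty}\mathbf P^N\cdot x$, where $\mathbf P^N:=\sum_{n=1}^N\mathbf p^n$.
   Context: Modules are contractive ($\|a\cdot x\|\le\|a\|\|x\|$). A sequence algebra is a normed algebra of complex sequences with coordinatewise operations containing $c_{00}$ (finite sequences) as a dense subalgebra, with $\|\mathbf p^n\|=1$, where $\mathbf p^n$ has $1$ in place $n$ and $0$ elsewhere. For $x\in X$, $x_n:=\mathbf p^n\cdot x$. $X$ is essential if the closed linear span of $\{a\cdot x:a\in A,x\in X\}$ is $X$; homogeneous if for $x,y\in X$, $\|x_n\|\le\|y_n\|$ for all $n$ implies $\|x\|\le\|y\|$. *)

(* Defs.v *)
From Stdlib Require Import Reals List.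
Open Scope R_scope.

Record C := mkC { Cre : R; Cim : R }.
Definition C0 : C := mkC 0 0.
Definition C1 : C := mkC 1 0.
Definition Cadd (z w : C) : C := mkC (Cre z + Cre w) (Cim z + Cim w).
Definition Copp (z : C) : C := mkC (- Cre z) (- Cim z).
Definition Cmul (z w : C) : C :=
  mkC (Cre z * Cre w - Cim z * Cim w) (Cre z * Cim w + Cim z * Cre w).
Definition Cmod (z : C) : R := sqrt (Cre z ^ 2 + Cim z ^ 2).

Definition cseq := nat -> C.
Definition szero : cseq := fun _ => C0.
Definition sadd (a b : cseq) : cseq := fun k => Cadd (a k) (b k).
Definition sopp (a : cseq) : cseq := fun k => Copp (a k).
Definition ssub (a b : cseq) : cseq := sadd a (sopp b).
Definition smul (a b : cseq) : cseq := fun k => Cmul (a k) (b k).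
Definition sscal (c : C) (a : cseq) : cseq := fun k => Cmul c (a k).

Definition pn (n : nat) : cseq := fun k => if Nat.eqb k n then C1 else C0.

(** P^N := p^0 + ... + p^(N-1)  (the N first unit sequences) *)
Fixpoint PN (N : nat) : cseq :=
  match N with
  | O => szero
  | S N' => sadd (PN N') (pn N')
  end.

Definition finite_seq (a : cseq) : Prop :=
  exists M : nat, forall k, (M <= k)%nat -> a k = C0.

Record SeqAlgebra := {
  inA : cseq -> Prop;
  normA : cseq -> R;
  inA_zero : inA szero;
  inA_add : forall a b, inA a -> inA b -> inA (sadd a b);
  inA_scal : forall c a, inA a -> inA (sscal c a);
  inA_mul : forall a b, inA a -> inA b -> inA (smul a b);
  normA_nonneg : forall a, inA a -> 0 <= normA a;
  normA_eq0 : forall a, inA a -> normA a = 0 -> a = szero;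
  normA_triangle : forall a b, inA a -> inA b ->
      normA (sadd a b) <= normA a + normA b;
  normA_scal : forall c a, inA a -> normA (sscal c a) = Cmod c * normA a;
  normA_submult : forall a b, inA a -> inA b ->
      normA (smul a b) <= normA a * normA b;
  inA_c00 : forall a, finite_seq a -> inA a;
  c00_dense : forall a, inA a -> forall eps, 0 < eps ->
      exists b, finite_seq b /\ normA (ssub a b) < eps;
  normA_pn : forall n, normA (pn n) = 1
}.

Record NormedModule (A : SeqAlgebra) := {
  X :> Type;
  Xzero : X;
  Xadd : X -> X -> X;
  Xopp : X -> X;
  Xscal : C -> X -> X;
  Xnorm : X -> R;
  act : cseq -> X -> X;
  Xadd_assoc : forall x y z, Xadd x (Xadd y z) = Xadd (Xadd x y) z;
  Xadd_comm : forall x y, Xadd x y = Xadd y x;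
  Xadd_zero : forall x, Xadd Xzero x = x;
  Xadd_opp : forall x, Xadd x (Xopp x) = Xzero;
  Xscal_one : forall x, Xscal C1 x = x;
  Xscal_assoc : forall c d x, Xscal (Cmul c d) x = Xscal c (Xscal d x);
  Xscal_addr : forall c x y, Xscal c (Xadd x y) = Xadd (Xscal c x) (Xscal c y);
  Xscal_addl : forall c d x, Xscal (Cadd c d) x = Xadd (Xscal c x) (Xscal d x);
  Xnorm_nonneg : forall x, 0 <= Xnorm x;
  Xnorm_eq0 : forall x, Xnorm x = 0 -> x = Xzero;
  Xnorm_triangle : forall x y, Xnorm (Xadd x y) <= Xnorm x + Xnorm y;
  Xnorm_scal : forall c x, Xnorm (Xscal c x) = Cmod c * Xnorm x;
  act_addr : forall a x y, inA A a ->
      act a (Xadd x y) = Xadd (act a x) (act a y);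
  act_addl : forall a b x, inA A a -> inA A b ->
      act (sadd a b) x = Xadd (act a x) (act b x);
  act_scall : forall c a x, inA A a -> act (sscal c a) x = Xscal c (act a x);
  act_scalr : forall c a x, inA A a -> act a (Xscal c x) = Xscal c (act a x);
  act_mul : forall a b x, inA A a -> inA A b ->
      act (smul a b) x = act a (act b x);
  act_contr : forall a x, inA A a -> Xnorm (act a x) <= normA A a * Xnorm x
}.

Arguments Xzero {A} _.
Arguments Xadd {A} _ _ _.
Arguments Xopp {A} _ _.
Arguments Xscal {A} _ _ _.
Arguments Xnorm {A} _ _.
Arguments act {A} _ _ _.

Definition Xsub {A} (M : NormedModule A) (x y : M) : M := Xadd M x (Xopp M y).

Fixpoint lincomb {A} (M : NormedModule A) (l : list (C * M)) : M :=
  match l with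
  | nil => Xzero M
  | (c, s) :: l' => Xadd M (Xscal M c s) (lincomb M l')
  end.

Definition in_closed_span {A} (M : NormedModule A) (S : M -> Prop) (x : M) : Prop :=
  forall eps, 0 < eps -> exists l : list (C * M),
    (forall cs, In cs l -> S (snd cs)) /\ Xnorm M (Xsub M x (lincomb M l)) < eps.

Definition essential {A} (M : NormedModule A) : Prop :=
  forall x : M, in_closed_span M (fun z => exists a y, inA A a /\ z = act M a y) x.

Definition homogeneous {A} (M : NormedModule A) : Prop :=
  forall x y : M, (forall n, Xnorm M (act M (pn n) x) <= Xnorm M (act M (pn n) y)) ->
    Xnorm M x <= Xnorm M y.

Definition converges_to {A} (M : NormedModule A) (u : nat -> M) (l : M) : Prop :=
  forall eps, 0 < eps -> exists N0, forall N, (N0 <= N)%nat -> Xnorm M (Xsub M (u N) l) < eps.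

(* Main.v *)
Require Import Defs.
From Stdlib Require Import Reals List Lra Lia FunctionalExtensionality.
Open Scope R_scope.
Require Import Defs.

Lemma C_ext (z w : Defs.C) : Cre z = Cre w -> Cim z = Cim w -> z = w.
Proof. destruct z, w; simpl; intros; subst; reflexivity. Qed.

Lemma Cmul1l z : Cmul C1 z = z.
Proof. apply C_ext; destruct z; simpl; ring. Qed.
Lemma Cmul0l z : Cmul C0 z = C0.
Proof. apply C_ext; destruct z; simpl; ring. Qed.
Lemma Cmul1r z : Cmul z C1 = z.
Proof. apply C_ext; destruct z; simpl; ring. Qed.
Lemma Cmul0r z : Cmul z C0 = C0.
Proof. apply C_ext; destruct z; simpl; ring. Qed.
Lemma Cadd0l z : Cadd C0 z = z.
Proof. apply C_ext; destruct z; simpl; ring. Qed.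
Lemma Cadd0r z : Cadd z C0 = z.
Proof. apply C_ext; destruct z; simpl; ring. Qed.
Lemma CmulC z w : Cmul z w = Cmul w z.
Proof. apply C_ext; destruct z, w; simpl; ring. Qed.

Definition m1 : Defs.C := Copp C1.

Lemma Cmod0 : Cmod C0 = 0.
Proof. unfold Cmod; simpl. transitivity (sqrt 0); [f_equal; ring | apply sqrt_0]. Qed.
Lemma Cmodm1 : Cmod m1 = 1.
Proof. unfold Cmod, m1; simpl. transitivity (sqrt 1); [f_equal; ring | apply sqrt_1]. Qed.

Lemma PN_spec N k : PN N k = if Nat.ltb k N then C1 else C0.
Proof.
  induction N as [|N IH]; simpl.
  - destruct k; reflexivity.
  - unfold sadd. rewrite IH. unfold pn.
    destruct (Nat.ltb_spec k N), (Nat.eqb_spec k N), (Nat.ltb_spec k (S N));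
      try lia; try (rewrite Cadd0r; reflexivity); try (rewrite Cadd0l; reflexivity).
Qed.

Lemma finite_pn n : finite_seq (pn n).
Proof. exists (S n). intros k Hk. unfold pn. destruct (Nat.eqb_spec k n); [lia|reflexivity]. Qed.
Lemma finite_PN N : finite_seq (PN N).
Proof. exists N. intros k Hk. rewrite PN_spec. destruct (Nat.ltb_spec k N); [lia|reflexivity]. Qed.
Lemma finite_sopp b : finite_seq b -> finite_seq (sopp b).
Proof. intros [M HM]. exists M. intros k Hk. unfold sopp. rewrite HM by lia.
  apply C_ext; simpl; ring. Qed.

Section S.
Variable A : SeqAlgebra.
Variable M : NormedModule A.

Notation "u +' v" := (Xadd M u v) (at level 50, left associativity).

Lemma Xscal0 v : Xscal M C0 v = Xzero M.
Proof. apply Xnorm_eq0. rewrite Xnorm_scal, Cmod0. ring. Qed.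

Lemma Xadd_zero_r v : v +' Xzero M = v.
Proof. rewrite Xadd_comm. apply Xadd_zero. Qed.

Lemma opp_unique w v : w +' v = Xzero M -> w = Xopp M v.
Proof.
  intro H. rewrite <- (Xadd_zero_r w), <- (Xadd_opp _ M v), Xadd_assoc, H, Xadd_zero.
  reflexivity.
Qed.

Lemma Xopp_scal v : Xopp M v = Xscal M m1 v.
Proof.
  symmetry. apply opp_unique.
  rewrite <- (Xscal_one _ M v) at 2. rewrite <- Xscal_addl.
  replace (Cadd m1 C1) with C0 by (apply C_ext; unfold m1; simpl; ring).
  apply Xscal0.
Qed.

Lemma Xnorm_opp v : Xnorm M (Xopp M v) = Xnorm M v.
Proof. rewrite Xopp_scal, Xnorm_scal, Cmodm1. ring. Qed.

Lemma sub_split a b c : Xsub M a b = Xsub M a c +' Xsub M c b.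
Proof.
  unfold Xsub. rewrite <- Xadd_assoc, (Xadd_assoc _ M (Xopp M c)).
  rewrite (Xadd_comm _ M (Xopp M c) c), Xadd_opp, Xadd_zero. reflexivity.
Qed.

Lemma Xopp_add u v : Xopp M (u +' v) = Xopp M u +' Xopp M v.
Proof. rewrite !Xopp_scal. apply Xscal_addr. Qed.

Lemma swap4 a b c d : (a +' b) +' (c +' d) = (a +' c) +' (b +' d).
Proof.
  rewrite <- !Xadd_assoc. f_equal. rewrite !Xadd_assoc. f_equal. apply Xadd_comm.
Qed.

Lemma sub_comm u v : Xnorm M (Xsub M u v) = Xnorm M (Xsub M v u).
Proof.
  rewrite <- Xnorm_opp. unfold Xsub. rewrite Xopp_add.
  rewrite (Xopp_scal (Xopp M v)), (Xopp_scal v), <- Xscal_assoc.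
  replace (Cmul m1 m1) with C1 by (apply C_ext; unfold m1; simpl; ring).
  rewrite Xscal_one, Xadd_comm. reflexivity.
Qed.

Lemma inA_PN N : inA A (PN N).
Proof. apply inA_c00, finite_PN. Qed.
Lemma inA_pn n : inA A (pn n).
Proof. apply inA_c00, finite_pn. Qed.

Definition T N := act M (PN N).

Lemma T_opp N u : T N (Xopp M u) = Xopp M (T N u).
Proof. unfold T. rewrite !Xopp_scal. apply act_scalr, inA_PN. Qed.

Lemma T_sub N u v : T N (Xsub M u v) = Xsub M (T N u) (T N v).
Proof. unfold Xsub. rewrite <- T_opp. unfold T. apply act_addr, inA_PN. Qed.

Lemma pn_PN n N : smul (pn n) (PN N) = if Nat.ltb n N then pn n else sscal C0 (pn n).
Proof.
  apply functional_extensionality; intro k. unfold smul, sscal.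
  rewrite PN_spec. unfold pn.
  destruct (Nat.ltb_spec n N), (Nat.eqb_spec k n), (Nat.ltb_spec k N); subst; try lia;
   rewrite ?Cmul1l, ?Cmul0l, ?Cmul1r, ?Cmul0r; reflexivity.
Qed.

Hypothesis Hhom : homogeneous M.

Lemma T_contr N w : Xnorm M (T N w) <= Xnorm M w.
Proof.
  apply Hhom. intro n. unfold T. rewrite <- act_mul by (apply inA_pn || apply inA_PN).
  rewrite pn_PN. destruct (Nat.ltb n N).
  - apply Rle_refl.
  - rewrite act_scall by apply inA_pn. rewrite Xnorm_scal, Cmod0, Rmult_0_l.
    apply Xnorm_nonneg.
Qed.

Definition good z := converges_to M (fun N => T N z) z.

Lemma good_closure z : (forall e, 0 < e -> exists z', good z' /\ Xnorm M (Xsub M z z') < e) -> good z.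
Proof.
  intros H eps Heps.
  destruct (H (eps/3)) as [z' [Hg Hz]]; [lra|].
  destruct (Hg (eps/3)) as [N0 HN0]; [lra|].
  exists N0. intros N HN. specialize (HN0 N HN). simpl in *.
  rewrite (sub_split _ _ (T N z')), (sub_split (T N z') _ z').
  rewrite <- T_sub.
  pose proof (Xnorm_triangle _ M (T N (Xsub M z z'))
     (Xadd M (Xsub M (T N z') z') (Xsub M z' z))).
  pose proof (Xnorm_triangle _ M (Xsub M (T N z') z') (Xsub M z' z)).
  pose proof (T_contr N (Xsub M z z')).
  pose proof (sub_comm z z').
  lra.
Qed.

Lemma good_add u v : good u -> good v -> good (u +' v).
Proof.
  intros Hu Hv eps Heps.
  destruct (Hu (eps/2)) as [N1 H1]; [lra|].
  destruct (Hv (eps/2)) as [N2 H2]; [lra|].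
  exists (max N1 N2). intros N HN.
  specialize (H1 N ltac:(lia)). specialize (H2 N ltac:(lia)).
  unfold T. rewrite act_addr by apply inA_PN. fold (T N u) (T N v).
  unfold Xsub in *. rewrite Xopp_add, swap4.
  pose proof (Xnorm_triangle _ M (Xadd M (T N u) (Xopp M u)) (Xadd M (T N v) (Xopp M v))).
  lra.
Qed.

Lemma good_scal c u : good u -> good (Xscal M c u).
Proof.
  intros Hu eps Heps.
  assert (Hc : 0 <= Cmod c) by (unfold Cmod; apply sqrt_pos).
  destruct (Hu (eps / (Cmod c + 1))) as [N0 H0].
  { apply Rdiv_lt_0_compat; lra. }
  exists N0. intros N HN. specialize (H0 N HN).
  unfold T. rewrite act_scalr by apply inA_PN. fold (T N u).
  unfold Xsub in *.
  rewrite (Xopp_scal (Xscal M c u)), <- Xscal_assoc, CmulC, Xscal_assoc, <- Xopp_scal,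
    <- Xscal_addr, Xnorm_scal.
  assert (Hn := Xnorm_nonneg _ M (Xadd M (T N u) (Xopp M u))).
  apply Rle_lt_trans with ((Cmod c + 1) * Xnorm M (Xadd M (T N u) (Xopp M u))).
  - nra.
  - apply (Rmult_lt_compat_l (Cmod c + 1)) in H0; [|lra].
    replace ((Cmod c + 1) * (eps / (Cmod c + 1))) with eps in H0 by (field; lra).
    exact H0.
Qed.

Lemma good_zero : good (Xzero M).
Proof.
  intros eps Heps. exists O. intros N _.
  assert (E : T N (Xzero M) = Xzero M).
  { transitivity (T N (Xscal M C0 (Xzero M))); [f_equal; symmetry; apply Xscal0|].
    unfold T. rewrite act_scalr by apply inA_PN. apply Xscal0. }
  rewrite E. unfold Xsub. rewrite Xadd_opp, <- (Xscal0 (Xzero M)), Xnorm_scal, Cmod0, Rmult_0_l. exact Heps.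
Qed.

Lemma good_lincomb l : (forall cs, In cs l -> good (snd cs)) -> good (lincomb M l).
Proof.
  induction l as [|[c s] l IH]; intro H; simpl.
  - apply good_zero.
  - apply good_add.
    + apply good_scal. apply (H (c, s)). left; reflexivity.
    + apply IH. intros cs Hc. apply H. right; exact Hc.
Qed.

Lemma good_fin b y : finite_seq b -> good (act M b y).
Proof.
  intros Hb eps Heps. destruct Hb as [K HK].
  exists K. intros N HN. unfold T.
  rewrite <- act_mul by (apply inA_PN || (apply inA_c00; exists K; exact HK)).
  replace (smul (PN N) b) with b.
  - unfold Xsub. rewrite Xadd_opp, <- (Xscal0 (Xzero M)), Xnorm_scal, Cmod0, Rmult_0_l. exact Heps.
  - apply functional_extensionality; intro k. unfold smul. rewrite PN_spec.
    destruct (Nat.ltb_spec k N).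
    + rewrite Cmul1l; reflexivity.
    + rewrite HK by lia. rewrite Cmul0r; reflexivity.
Qed.

Lemma act_ssub a b y : inA A a -> finite_seq b ->
  act M (ssub a b) y = Xsub M (act M a y) (act M b y).
Proof.
  intros Ha Hb. unfold ssub, Xsub.
  rewrite act_addl by (auto; apply inA_c00, finite_sopp, Hb).
  f_equal.
  replace (sopp b) with (sscal m1 b).
  - rewrite act_scall by (apply inA_c00, Hb). rewrite Xopp_scal. reflexivity.
  - apply functional_extensionality; intro k. unfold sscal, sopp, m1.
    apply C_ext; destruct (b k); simpl; ring.
Qed.

Lemma good_act a y : inA A a -> good (act M a y).
Proof.
  intros Ha. apply good_closure. intros e He.
  assert (Hy := Xnorm_nonneg _ M y).
  destruct (c00_dense A a Ha (e / (Xnorm M y + 1))) as [b [Hb Hab]].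
  { apply Rdiv_lt_0_compat; lra. }
  exists (act M b y). split; [apply good_fin; exact Hb|].
  rewrite <- act_ssub by auto.
  assert (Hin : inA A (ssub a b)).
  { apply inA_add; [exact Ha|]. apply inA_c00, finite_sopp, Hb. }
  pose proof (act_contr A M (ssub a b) y Hin).
  pose proof (normA_nonneg A _ Hin).
  apply Rle_lt_trans with (normA A (ssub a b) * (Xnorm M y + 1)); [nra|].
  apply Rmult_lt_compat_r with (r := Xnorm M y + 1) in Hab; [|lra].
  replace (e / (Xnorm M y + 1) * (Xnorm M y + 1)) with e in Hab by (field; lra).
  exact Hab.
Qed.

End S.

Theorem proposition1p5 (A : SeqAlgebra) (M : NormedModule A)
  (Hess : essential M) (Hhom : homogeneous M) :
  forall x : M, converges_to M (fun N => act M (PN N) x) x.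
Proof.
  intro x. apply (good_closure A M Hhom). intros e He.
  destruct (Hess x e He) as [l [Hl Hx]].
  exists (lincomb M l). split; [|exact Hx].
  apply good_lincomb; auto. intros cs Hc.
  destruct (Hl cs Hc) as [a [y [Ha ->]]]. apply good_act; auto.
Qed.
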